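(* Let $x\in\mathcal D$ be such that $q_n(t)=\sum_{i:\,t^n_i\le t}(x(t^n_{i+1})-x(t^n_i))^2$ converges pointwise on $[0,\infty)$ to a function $q$ satisfying $q(t)=q^c(t)+\sum_{u\le t}(\Delta x(u))^2$ with $q^c$ continuous and nondecreasing. Then $q_n\to q$ in the Skorokhod $J_1$ topology.
   Context: Let $\pi=(\pi_n)_{n\ge1}$ be a sequence of partitions $\pi_n=(t^n_0,\dots,t^n_{k_n})$ with $0=t^n_0<\dots<t^n_{k_n}<\infty$, $t^n_{k_n}\uparrow\infty$, and mesh tending to $0$ on compacts; sums over $i$ run over $0\le i<k_n$. $\mathcal D$ is the space of càdlàg functions $[0,\infty)\to\mathbb R$, with the Skorokhod $J_1$ topology; $\Delta x(u)=x(u)-x(u-)$. *)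

(* Defs.v *)
From HB Require Import structures.
From mathcomp Require Import all_boot all_order all_algebra.
From mathcomp Require Import all_classical all_reals all_analysis.
Set Implicit Arguments. Unset Strict Implicit. Unset Printing Implicit Defensive.
Import Order.TTheory GRing.Theory Num.Theory.
Import numFieldNormedType.Exports.
Local Open Scope classical_set_scope.
Local Open Scope ring_scope.

(* Functions on [0, +oo) are represented as functions R -> R; only their
   values on [0, +oo) matter. *)

(* A sequence of partitions pi_n = (t n 0, ..., t n (k n)). *)
Definition partition_seq {R : realType} (t : nat -> nat -> R) (k : nat -> nat) : Prop :=
  [/\ (forall n, t n 0%N = 0),
      (forall n i, (i < k n)%N -> t n i < t n i.+1),
      (forall n, t n (k n) <= t n.+1 (k n.+1)),
      ((fun n => t n (k n)) @ \oo --> +oo) &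
      (forall T : R, forall eps : R, 0 < eps ->
         \forall n \near \oo, forall i, (i < k n)%N -> t n i <= T ->
            t n i.+1 - t n i <= eps)].

Definition cadlag {R : realType} (f : R -> R) : Prop :=
  (forall s, 0 <= s -> f @ s^'+ --> f s) /\
  (forall s, 0 < s -> cvg (f @ s^'-)).

Definition jump {R : realType} (f : R -> R) (u : R) : R :=
  f u - lim (f @ u^'-).

Definition qv_n {R : realType} (t : nat -> nat -> R) (k : nat -> nat)
  (x : R -> R) (n : nat) (s : R) : R :=
  \sum_(i < k n | t n i <= s) (x (t n i.+1) - x (t n i)) ^+ 2.

Definition time_change {R : realType} (lam : R -> R) : Prop :=
  [/\ lam 0 = 0,
      {within `[0, +oo[, continuous lam},
      (forall s u, 0 <= s -> s < u -> lam s < lam u) &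
      (forall v, 0 <= v -> exists2 s, 0 <= s & lam s = v)].

(* Convergence in the Skorokhod J1 topology on D[0, +oo)
   (Jacod–Shiryaev, Thm VI.1.14 characterization). *)
Definition J1_cvg {R : realType} (f : nat -> R -> R) (g : R -> R) : Prop :=
  exists lam : nat -> R -> R,
    [/\ (forall n, time_change (lam n)),
        (forall eps : R, 0 < eps -> \forall n \near \oo,
            forall s, 0 <= s -> `|lam n s - s| <= eps) &
        (forall T : R, forall eps : R, 0 < eps -> \forall n \near \oo,
            forall s, 0 <= s -> s <= T -> `|f n (lam n s) - g s| <= eps)].

(* Main.v *)
Require Import Defs.
From HB Require Import structures.
From mathcomp Require Import all_boot all_order all_algebra.
From mathcomp Require Import all_classical all_reals all_analysis.
Import Order.TTheory GRing.Theory Num.Theory.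
Import numFieldNormedType.Exports.
Local Open Scope classical_set_scope.
Local Open Scope ring_scope.

Lemma near_ex (P : nat -> Prop) : (\forall n \near \oo, P n) -> exists N, forall n, (N <= n)%N -> P n.
Proof. rewrite /prop_near1 /nbhs /=. move=> [N _ HN]; exists N => n /HN. done. Qed.
Lemma ex_near (P : nat -> Prop) : (exists N, forall n, (N <= n)%N -> P n) -> \forall n \near \oo, P n.
Proof. by move=> [N HN]; exists N => // n /HN. Qed.
Lemma tc_id (R : realType) : time_change (@id R).
Proof.
split => //.
- by apply: continuous_subspaceT => s; apply: cvg_id.
- by move=> v v0; exists v.
Qed.
Definition good {R : realType} (f : nat -> R -> R) (g : R -> R) n (T eps : R) (lam : R -> R) :=
  [/\ time_change lam, (forall s, 0 <= s -> `|lam s - s| <= eps) &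
        (forall s, 0 <= s -> s <= T -> `|f n (lam s) - g s| <= eps)].

Lemma arch_m0 (R : realType) (T eps : R) : 0 < eps ->
  exists m0 : nat, forall m, (m0 <= m)%N -> T <= m%:R /\ m.+1%:R^-1 <= eps.
Proof.
move=> e0; exists (maxn (Num.truncn eps^-1) (Num.truncn `|T|)).+1 => m.
rewrite gtn_max => /andP[h1 h2]; split.
  apply: le_trans (ler_norm T) _.
  have /andP[_ /ltW H] := truncn_itv (normr_ge0 T).
  apply: (le_trans H); rewrite ler_nat; exact: h2.
rewrite invf_ple ?posrE ?ltr0n // ?invr_gt0 //.
have e1 : 0 <= eps^-1 by rewrite invr_ge0 ltW.
have /andP[_ /ltW H] := truncn_itv e1.
apply: (le_trans H); rewrite ler_nat; exact: ltnW.
Qed.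
Lemma J1_of_local (R : realType) (f : nat -> R -> R) (g : R -> R) :
  (forall T eps : R, 0 < eps -> \forall n \near \oo, exists lam, good f g n T eps lam) ->
  J1_cvg f g.
Proof.
move=> H.
have /choice [N HN] : forall m : nat, exists N, forall n, (N <= n)%N ->
   exists lam, good f g n m%:R (m.+1%:R^-1) lam.
  move=> m; apply: near_ex; apply: H; by rewrite invr_gt0 ltr0n.
have /choice [lamf Hl] : forall nm : nat * nat, exists lam, time_change lam /\
   ((exists l, good f g nm.1 nm.2%:R (nm.2.+1%:R^-1) l) -> good f g nm.1 nm.2%:R (nm.2.+1%:R^-1) lam).
  move=> nm; case: (pselect (exists l, good f g nm.1 nm.2%:R (nm.2.+1%:R^-1) l)).
    by move=> [l Hl]; exists l; split => //; case: Hl.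
  by move=> nex; exists id; split; [exact: tc_id | move=> /nex].
pose M n := \max_(m < n.+1 | (N m <= n)%N) m.
have M1 m0 n : (m0 <= n)%N -> (N m0 <= n)%N -> (m0 <= M n)%N.
  move=> h1 h2; rewrite /M.
  have := @leq_bigmax_cond _ (fun m : 'I_n.+1 => (N m <= n)%N) (fun m : 'I_n.+1 => nat_of_ord m) (Ordinal (h1 : (m0 < n.+1)%N)).
  by apply.
have M2 n : (N 0 <= n)%N -> (N (M n) <= n)%N.
  move=> h; rewrite /M; apply: (big_ind (fun x => (N x <= n)%N)) => //.
  by move=> a b ha hb; rewrite /maxn; case: ifP.
have ev : forall m0, \forall n \near \oo, (m0 <= M n)%N /\ good f g n (M n)%:R ((M n).+1%:R^-1) (lamf (n, M n)).
  move=> m0; apply: ex_near; exists (maxn m0 (maxn (N m0) (N 0))) => n.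
  rewrite !geq_max => /and3P[h1 h2 h3]; split; first exact: M1.
  apply: (proj2 (Hl (n, M n))); exact: HN (M2 _ h3).
rewrite /J1_cvg; exists (fun n => lamf (n, M n)); split.
- by move=> n; case: (Hl (n, M n)).
- move=> eps e0; have [m0 Hm0] := @arch_m0 R 0 eps e0.
  near=> n.
  have [h1 [_ hg _]] : (m0 <= M n)%N /\ good f g n (M n)%:R ((M n).+1%:R^-1) (lamf (n, M n)).
    by near: n; exact: ev.
  move=> s s0; apply: le_trans (hg s s0) _; exact: (proj2 (Hm0 _ h1)).
- move=> T eps e0; have [m0 Hm0] := @arch_m0 R T eps e0.
  near=> n.
  have [h1 [_ _ hg]] : (m0 <= M n)%N /\ good f g n (M n)%:R ((M n).+1%:R^-1) (lamf (n, M n)).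
    by near: n; exact: ev.
  have [hT he] := Hm0 _ h1.
  move=> s s0 sT; apply: le_trans (hg s s0 (le_trans sT hT)) he.
Unshelve. all: by end_near.
Qed.
Lemma clamp_cont (R : realType) (l u : R) : continuous (fun s : R => Num.min (Num.max s l) u).
Proof.
have h1 := @max_fun_continuous _ R R id (fun _ => l) (fun x => cvg_id) (@cst_continuous _ _ l).
exact: (@min_fun_continuous _ R R _ (fun _ => u) h1 (@cst_continuous _ _ u)).
Qed.

Lemma cont_sum (R : realType) (F : nat -> R -> R) :
  (forall l, continuous (F l)) -> forall K, continuous (fun s => \sum_(0 <= l < K) F l s).
Proof.
move=> hF; elim=> [|K IH].
  by under eq_fun do rewrite big_geq //; exact: cst_continuous.
under eq_fun do rewrite big_nat_recr //.
by move=> x; apply: continuousD; [exact: IH | exact: hF].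
Qed.

Definition clampR {R : realType} (l u s : R) := Num.min (Num.max s l) u.
Definition plc {R : realType} (a b : nat -> R) j := (b j.+1 - b j) / (a j.+1 - a j).
Definition pl {R : realType} (K : nat) (a b : nat -> R) (s : R) : R :=
  \sum_(0 <= l < K) plc a b l * (clampR (a l) (a l.+1) s - a l) + (Num.max s (a K) - a K).
Definition plhyp {R : realType} (K : nat) (a b : nat -> R) :=
  [/\ a 0%N = 0, b 0%N = 0, (forall j, (j < K)%N -> a j < a j.+1) & (forall j, (j < K)%N -> b j < b j.+1)].

Lemma incr_le (R : realType) (K : nat) (a : nat -> R) :
  (forall j, (j < K)%N -> a j < a j.+1) -> forall i j, (i <= j <= K)%N -> a i <= a j.
Proof.
move=> h i; elim=> [|j IH].
  by rewrite leqn0 => /andP[/eqP -> _].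
move=> /andP[]; rewrite leq_eqVlt => /orP[/eqP -> //| hij hjK].
apply: le_trans (ltW (h j hjK)); apply: IH; rewrite -ltnS hij /=; exact: ltnW.
Qed.

Lemma incr_lt (R : realType) (K : nat) (a : nat -> R) :
  (forall j, (j < K)%N -> a j < a j.+1) -> forall i j, (i < j <= K)%N -> a i < a j.
Proof.
move=> h i j /andP[hij hjK]; apply: lt_le_trans (h i _) _.
  exact: leq_trans hij hjK.
by apply: incr_le h _ _ _; rewrite hij hjK.
Qed.

Lemma pl_piece (R : realType) K (a b : nat -> R) j s : plhyp K a b -> (j < K)%N ->
  a j <= s <= a j.+1 -> pl K a b s = b j + plc a b j * (s - a j).
Proof.
move=> [a0 b0 ha hb] jK /andP[s1 s2].
have aj1K : a j.+1 <= a K by apply: incr_le ha _ _ _; rewrite jK leqnn.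
have E1 : \sum_(0 <= i < j) plc a b i * (clampR (a i) (a i.+1) s - a i) = b j.
  rewrite (eq_big_nat _ _ (F2 := fun l => b l.+1 - b l)); last first.
    move=> l /andP[_ lj].
    have h1 : a l.+1 <= s by apply: le_trans s1; apply: incr_le ha _ _ _; rewrite lj (ltnW jK).
    have h0 : a l <= s by apply: le_trans h1; apply: ltW; apply: ha; exact: ltn_trans lj jK.
    rewrite /clampR (max_l h0) (min_r h1) /plc divfK //.
    by rewrite subr_eq0 gt_eqF //; apply: ha; exact: ltn_trans lj jK.
  by rewrite telescope_sumr // b0 subr0.
have E2 : \sum_(j.+1 <= i < K) plc a b i * (clampR (a i) (a i.+1) s - a i) = 0.
  rewrite big1_seq //.
  move=> l /andP[_]; rewrite mem_index_iota => /andP[jl lK].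
  have hl : s <= a l by apply: le_trans s2 _; apply: incr_le ha _ _ _; rewrite jl (ltnW lK).
  by rewrite /clampR (max_r hl) (min_l (ltW (ha _ lK))) subrr mulr0.
rewrite /pl (max_r (le_trans s2 aj1K)) subrr addr0.
rewrite (big_cat_nat _ (n:=j)) //=; last exact: ltnW.
rewrite [X in _ + X]big_ltn //= E1 E2 addr0 /clampR (max_l s1) (min_l s2) //.
Qed.

Lemma pl_tail (R : realType) K (a b : nat -> R) s : plhyp K a b ->
  a K <= s -> pl K a b s = b K + (s - a K).
Proof.
move=> [a0 b0 ha hb] sK; rewrite /pl (max_l sK); congr (_ + _).
rewrite (eq_big_nat _ _ (F2 := fun l => b l.+1 - b l)); last first.
  move=> l /andP[_ lK].
  have h1 : a l.+1 <= s by apply: le_trans sK; apply: incr_le ha _ _ _; rewrite lK leqnn.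
  have h0 : a l <= s by apply: le_trans h1; apply: ltW; apply: ha.
  rewrite /clampR (max_l h0) (min_r h1) /plc divfK //.
  by rewrite subr_eq0 gt_eqF //; apply: ha.
by rewrite telescope_sumr // b0 subr0.
Qed.
Lemma locate (R : realType) (K : nat) (a : nat -> R) v :
  a 0%N <= v -> v < a K -> exists2 j, (j < K)%N & a j <= v < a j.+1.
Proof.
elim: K => [|K IH] h0 hK; first by move: (le_lt_trans h0 hK); rewrite ltxx.
case: (ltP v (a K)) => hv.
  by have [j jK hj] := IH h0 hv; exists j => //; exact: ltnW.
by exists K => //; rewrite hv hK.
Qed.

Lemma clamp_mono (R : realType) (l u s t : R) : s <= t -> clampR l u s <= clampR l u t.
Proof.
move=> st; rewrite /clampR; apply: le_min2 => //; exact: le_max2.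
Qed.

Lemma pl_mono (R : realType) K (a b : nat -> R) s t : plhyp K a b -> s <= t -> pl K a b s <= pl K a b t.
Proof.
move=> [a0 b0 ha hb] st; rewrite /pl; apply: lerD.
  apply: ler_sum_nat => l /andP[_ lK]; apply: ler_wpM2l.
    by rewrite /plc divr_ge0 // subr_ge0 ltW //; [exact: hb | exact: ha].
  by apply: lerB => //; exact: clamp_mono.
by apply: lerB => //; exact: le_max2.
Qed.

Lemma pl0 (R : realType) K (a b : nat -> R) : plhyp K a b -> pl K a b 0 = 0.
Proof.
move=> H; case: (H) => a0 b0 ha hb.
case: K H ha hb => [|K] H ha hb.
  rewrite (@pl_tail R 0%N a b 0 H); last by rewrite a0.
  by rewrite a0 b0 subrr addr0.
rewrite (@pl_piece R K.+1 a b 0%N 0 H) //.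
  by rewrite a0 b0 subrr mulr0 addr0.
rewrite a0 lexx /= -a0; exact: ltW (ha 0%N isT).
Qed.

Lemma plc_gt0 (R : realType) K (a b : nat -> R) j : plhyp K a b -> (j < K)%N -> 0 < plc a b j.
Proof.
by move=> [a0 b0 ha hb] jK; rewrite /plc divr_gt0 // subr_gt0; [exact: hb | exact: ha].
Qed.

Lemma pl_strict (R : realType) K (a b : nat -> R) s t : plhyp K a b -> 0 <= s -> s < t ->
  pl K a b s < pl K a b t.
Proof.
move=> H s0 st; case: (H) => a0 b0 ha hb.
case: (ltP s (a K)) => hs.
  have h00 : a 0%N <= s by rewrite a0.
  have [j jK /andP[h1 h2]] := @locate R K a s h00 hs.
  pose w := Num.min t (a j.+1).
  have sw : s < w by rewrite lt_min st h2.
  have w2 : w <= a j.+1 by rewrite ge_min lexx orbT.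
  apply: lt_le_trans (_ : pl K a b w <= _); last by apply: pl_mono => //; rewrite ge_min lexx.
  rewrite (@pl_piece R K a b j s H jK); last by rewrite h1 (ltW h2).
  rewrite (@pl_piece R K a b j w H jK); last by rewrite w2 andbT (le_trans h1 (ltW sw)).
  have cp := @plc_gt0 R K a b j H jK.
  by rewrite ltrD2l ltr_pM2l // ltrD2r.
rewrite (@pl_tail R K a b s H hs) (@pl_tail R K a b t H (le_trans hs (ltW st))).
by rewrite ltrD2l ltrD2r.
Qed.

Lemma pl_cont (R : realType) K (a b : nat -> R) : continuous (pl K a b).
Proof.
have hF : forall l, continuous (fun s => plc a b l * (clampR (a l) (a l.+1) s - a l)).
  move=> l y; apply: cvgM; first exact: cvg_cst.
  apply: cvgB; [exact: clamp_cont | exact: cvg_cst].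
have hS := @cont_sum R _ hF K.
have h1 := @max_fun_continuous _ R R id (fun _ => a K) (fun x => cvg_id) (@cst_continuous _ _ (a K)).
rewrite /pl => x; apply: cvgD; first exact: hS.
apply: cvgB; [exact: h1 | exact: cvg_cst].
Qed.
From mathcomp Require Import ring lra.
Lemma pl_tc (R : realType) K (a b : nat -> R) : plhyp K a b -> time_change (pl K a b).
Proof.
move=> H; case: (H) => a0 b0 ha hb.
have aK0 : 0 <= a K by rewrite -a0; apply: incr_le ha _ _ _; rewrite leq0n leqnn.
have bK0 : 0 <= b K by rewrite -b0; apply: incr_le hb _ _ _; rewrite leq0n leqnn.
split.
- exact: pl0.
- apply: continuous_subspaceT; exact: pl_cont.
- by move=> s u s0 su; apply: pl_strict.
- move=> v v0.
  have hS : a K <= a K + v by rewrite lerDl.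
  have := @IVT R (pl K a b) 0 (a K + v) v (addr_ge0 aK0 v0).
  case.
  + apply: continuous_subspaceT; exact: pl_cont.
  + rewrite (@pl0 R K a b H) (@pl_tail R K a b _ H hS).
    apply/andP; split; first by rewrite ge_min v0.
    rewrite le_max; apply/orP; right; lra.
  + move=> c; rewrite in_itv /= => /andP[c0 _] hc; by exists c.
Qed.

Lemma pl_range (R : realType) K (a b : nat -> R) j s : plhyp K a b -> (j < K)%N ->
  a j <= s < a j.+1 -> b j <= pl K a b s < b j.+1.
Proof.
move=> H jK /andP[h1 h2]; case: (H) => a0 b0 ha hb.
rewrite (@pl_piece R K a b j s H jK); last by rewrite h1 ltW.
have da : 0 < a j.+1 - a j by rewrite subr_gt0; exact: ha.
have db : 0 < b j.+1 - b j by rewrite subr_gt0; exact: hb.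
have cp := @plc_gt0 R K a b j H jK.
apply/andP; split.
  rewrite lerDl; apply: mulr_ge0; [exact: ltW | by rewrite subr_ge0].
have hc : plc a b j * (a j.+1 - a j) = b j.+1 - b j by rewrite /plc divfK // gt_eqF.
have : plc a b j * (s - a j) < plc a b j * (a j.+1 - a j) by rewrite ltr_pM2l // ltrD2r.
rewrite hc; lra.
Qed.

Lemma pl_dev (R : realType) K (a b : nat -> R) (D : R) : plhyp K a b ->
  (forall j, (j <= K)%N -> `|b j - a j| <= D) ->
  forall s, 0 <= s -> `|pl K a b s - s| <= D.
Proof.
move=> H hD s s0; case: (H) => a0 b0 ha hb.
case: (ltP s (a K)) => hs; last first.
  rewrite (@pl_tail R K a b s H hs).
  have -> : b K + (s - a K) - s = b K - a K by ring.
  exact: hD.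
have h00 : a 0%N <= s by rewrite a0.
have [j jK /andP[h1 h2]] := @locate R K a s h00 hs.
rewrite (@pl_piece R K a b j s H jK); last by rewrite h1 ltW.
have da : 0 < a j.+1 - a j by rewrite subr_gt0; exact: ha.
pose th := (s - a j) / (a j.+1 - a j).
have th0 : 0 <= th by apply: divr_ge0; [by rewrite subr_ge0 | exact: ltW].
have th1 : th <= 1 by rewrite /th ler_pdivrMr // mul1r lerB // ltW.
have -> : b j + plc a b j * (s - a j) - s =
   (1 - th) * (b j - a j) + th * (b j.+1 - a j.+1).
  rewrite /plc /th; field; by rewrite gt_eqF.
clearbody th.
apply: le_trans (ler_normD _ _) _.
rewrite !normrM (ger0_norm th0) (ger0_norm (_ : 0 <= 1 - th)); last by rewrite subr_ge0.
have e1 := hD j (ltnW jK).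
have e2 := hD j.+1 jK.
have -> : D = (1 - th) * D + th * D by ring.
apply: lerD; apply: ler_wpM2l => //; by rewrite subr_ge0.
Qed.
Definition dsq {R : realType} (t : nat -> nat -> R) (x : R -> R) n i := (x (t n i.+1) - x (t n i)) ^+ 2.

Lemma qv_mono (R : realType) t k (x : R -> R) n s u : s <= u -> qv_n t k x n s <= qv_n t k x n u.
Proof.
move=> su; rewrite /qv_n [X in X <= _]big_mkcond [X in _ <= X]big_mkcond /=.
apply: ler_sum => i _; case: ifP => h1; last by case: ifP => _ //; exact: sqr_ge0.
by rewrite (le_trans h1 su).
Qed.

Lemma qv_step (R : realType) t k (x : R -> R) n i v :
  (forall j, (j < k n)%N -> t n j < t n j.+1) -> (i < k n)%N ->
  t n i <= v < t n i.+1 -> qv_n t k x n v = qv_n t k x n (t n i).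
Proof.
move=> ht ik /andP[h1 h2]; rewrite /qv_n; apply: eq_bigl => j.
have jk := ltn_ord j.
case: (leqP j i) => ji.
  have : t n j <= t n i by apply: incr_le ht _ _ _; rewrite ji (ltnW ik).
  by move=> h; rewrite h (le_trans h h1).
have h : t n i.+1 <= t n j by apply: incr_le ht _ _ _; rewrite ji (ltnW jk).
have h' : t n i < t n j by apply: incr_lt ht _ _ _; rewrite ji (ltnW jk).
by rewrite !leNgt (lt_le_trans h2 h) h'.
Qed.

Lemma qv_jump (R : realType) t k (x : R -> R) n i v :
  (forall j, (j < k n)%N -> t n j < t n j.+1) -> (i < k n)%N ->
  v < t n i -> qv_n t k x n v + dsq t x n i <= qv_n t k x n (t n i).
Proof.
move=> ht ik vi; rewrite /qv_n.
rewrite [X in _ <= X](bigD1 (Ordinal ik)) /=; last exact: lexx.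
rewrite [X in X <= _]addrC /dsq lerD2l [X in X <= _]big_mkcond [X in _ <= X]big_mkcond /=.
apply: ler_sum => j _; case: ifP => h1; last by case: ifP => _ //; exact: sqr_ge0.
rewrite (le_trans h1 (ltW vi)) /=.
have -> : (j != Ordinal ik) = true.
  apply/eqP => ej; move: (le_lt_trans h1 vi); by rewrite ej /= ltxx.
by [].
Qed.
Lemma gap1 (R : realType) (z : R) (s : seq R) :
  exists2 g : R, 0 < g & forall y, y \in s -> y != z -> g <= `|z - y|.
Proof.
elim: s => [|y s [g g0 hg]]; first by exists 1.
case: (eqVneq y z) => [->|yz].
  exists g => // w; rewrite inE => /orP[/eqP -> /eqP //|]; exact: hg.
exists (Num.min g `|z - y|).
  by rewrite lt_min g0 normr_gt0 subr_eq0 eq_sym yz.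
move=> w; rewrite inE => /orP[/eqP -> _|ws wz]; first by rewrite ge_min lexx orbT.
by rewrite ge_min hg.
Qed.

Lemma seq_gap (R : realType) (s : seq R) :
  exists2 g : R, 0 < g & forall x y, x \in s -> y \in s -> x != y -> g <= `|x - y|.
Proof.
elim: s => [|z s [g g0 hg]]; first by exists 1.
have [g1 g10 hg1] := @gap1 R z s.
exists (Num.min g g1); first by rewrite lt_min g0 g10.
move=> x y; rewrite !inE => /orP[/eqP ->|xs] /orP[/eqP ->|ys] xy.
- by rewrite eqxx in xy.
- by rewrite ge_min hg1 ?orbT // eq_sym.
- by rewrite ge_min distrC hg1 ?orbT.
- by rewrite ge_min hg.
Qed.

Lemma seq_max (R : realType) (s : seq R) (P : pred R) :
  has P s -> exists g, [/\ g \in s, P g & forall y, y \in s -> P y -> y <= g].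
Proof.
elim: s => [|z s IH] //= /orP[Pz|hs].
  case: (boolP (has P s)) => [/IH [g [gs Pg hg]]|hn].
    case: (leP z g) => zg.
      exists g; split => //; first by rewrite inE gs orbT.
      by move=> y; rewrite inE => /orP[/eqP ->|]; [| exact: hg].
    exists z; split => //; first by rewrite inE eqxx.
    move=> y; rewrite inE => /orP[/eqP ->//|ys Py]; apply: le_trans (hg y ys Py) (ltW zg).
  exists z; split => //; first by rewrite inE eqxx.
  move=> y; rewrite inE => /orP[/eqP ->//|ys Py].
  by move/hasPn: hn => /(_ y ys); rewrite Py.
have [g [gs Pg hg]] := IH hs.
case: (boolP (P z)) => Pz; last first.
  exists g; split => //; first by rewrite inE gs orbT.
  by move=> y; rewrite inE => /orP[/eqP -> Py|]; [rewrite Py in Pz | exact: hg].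
case: (leP z g) => zg.
  exists g; split => //; first by rewrite inE gs orbT.
  by move=> y; rewrite inE => /orP[/eqP ->|]; [| exact: hg].
exists z; split => //; first by rewrite inE eqxx.
move=> y; rewrite inE => /orP[/eqP ->//|ys Py]; apply: le_trans (hg y ys Py) (ltW zg).
Qed.

Lemma seq_min (R : realType) (s : seq R) (P : pred R) :
  has P s -> exists g, [/\ g \in s, P g & forall y, y \in s -> P y -> g <= y].
Proof.
move=> h.
have h' : has (fun y => P (- y)) (map -%R s).
  move/hasP: h => [y ys Py]; apply/hasP; exists (- y); first exact: map_f.
  by rewrite opprK.
have [g [gs Pg hg]] := @seq_max R _ _ h'.
exists (- g); split => //.
  by move/mapP: gs => [y ys ->]; rewrite opprK.
move=> y ys Py; rewrite lerNl; apply: hg; first exact: map_f.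
by rewrite opprK.
Qed.
Lemma mono_unif (R : realType) (f : R -> R) (T eta : R) : 0 <= T -> 0 < eta ->
  {within `[0, +oo[, continuous f} -> (forall s u, 0 <= s -> s <= u -> f s <= f u) ->
  exists2 dl : R, 0 < dl & forall a b, 0 <= a -> a <= b -> b <= T -> b - a <= dl -> f b - f a <= eta.
Proof.
move=> T0 e0 fc fm.
pose l := eta / 2.
have l0 : 0 < l by rewrite /l divr_gt0.
pose D := f T - f 0.
have D0 : 0 <= D by rewrite /D subr_ge0; apply: fm.
pose N0 := Num.truncn (D / l).
pose L (m : nat) := f 0 + m%:R * l.
have fcT : {within `[0, T], continuous f}.
  apply: continuous_subspaceW fc => y /=; rewrite !in_itv /= andbT => /andP[]; done.
have /choice [c hc] : forall m : nat, exists c : R, (m <= N0)%N -> c \in `[0, T] /\ f c = L m.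
  move=> m; case: (leqP m N0) => mN; last by exists 0.
  have hm : m%:R * l <= D.
    have : (m%:R <= D / l) by rewrite -truncn_ge_nat // divr_ge0 // ltW.
    by rewrite ler_pdivlMr.
  have := @IVT R f 0 T (L m) T0 fcT.
  case.
    have f0T : f 0 <= f T by apply: fm.
    rewrite /L (min_l f0T) (max_r f0T); apply/andP; split.
      by rewrite lerDl mulr_ge0 // ltW.
    rewrite /D in hm; lra.
  by move=> y hy fy; exists y.
pose C := [seq c m | m <- iota 0 N0.+1].
have [g g0 hg] := @seq_gap R C.
exists (g / 2); first by rewrite divr_gt0.
move=> a b a0 ab bT bad.
rewrite leNgt; apply/negP => hab.
have fa0 : 0 <= f a - f 0 by rewrite subr_ge0; apply: fm.
pose m := (Num.truncn ((f a - f 0) / l)).+1.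
have hm1 : f a < L m.
  have := truncnS_gt ((f a - f 0) / l); rewrite -/m ltr_pdivrMr // /L => ?; lra.
have el : eta = 2 * l by rewrite /l; field.
have t1 : (Num.truncn ((f a - f 0) / l))%:R <= (f a - f 0) / l by rewrite truncn_le divr_ge0 // ltW.
have t2 : (Num.truncn ((f a - f 0) / l))%:R * l <= f a - f 0 by rewrite -ler_pdivlMr.
have hm2 : L m <= f a + l.
  rewrite /L /m -natr1 mulrDl mul1r; lra.
have Lm1 : L m.+1 = L m + l by rewrite /L -natr1; lra.
have fbT : f b <= f T by apply: fm => //; exact: le_trans ab.
have mN : (m.+1 <= N0)%N.
  rewrite /N0 truncn_ge_nat; last by rewrite divr_ge0 // ltW.
  rewrite ler_pdivlMr //.
  have : L m.+1 < f T by lra.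
  by rewrite /L /D => ?; lra.
have [cm1 cm2] := hc m (ltnW mN).
have [cm'1 cm'2] := hc m.+1 mN.
move: cm1 cm'1; rewrite !in_itv /= => /andP[cm0 _] /andP[cm'0 _].
have inab : forall y, 0 <= y -> f a < f y -> f y < f b -> a < y < b.
  move=> y y0 h1 h2; apply/andP; split.
    rewrite ltNge; apply/negP => ya; have := fm _ _ y0 ya; lra.
  rewrite ltNge; apply/negP => yb; have := fm _ _ (le_trans a0 ab) yb; lra.
have /andP[i1 i2] : a < c m < b by apply: inab => //; rewrite cm2; lra.
have /andP[j1 j2] : a < c m.+1 < b by apply: inab => //; rewrite cm'2; lra.
have neq : c m != c m.+1.
  apply/eqP => e; move: cm'2; rewrite -e cm2; lra.
have := hg (c m) (c m.+1).
have memC : forall j, (j <= N0)%N -> c j \in C.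
  by move=> j jN; apply: map_f; rewrite mem_iota add0n ltnS jN.
move=> /(_ (memC _ (ltnW mN)) (memC _ mN) neq).
have : `|c m - c m.+1| < b - a.
  rewrite ltr_norml; apply/andP; split; lra.
lra.
Qed.
Lemma esum_approx (R : realType) (J Phi : R -> R) (T' eta : R) :
  (forall u, 0 <= J u) -> 0 < eta -> 0 <= T' ->
  (forall s, 0 <= s -> (\esum_(u in [set u : R | (0 < u <= s)%R]) (J u)%:E = (Phi s)%:E)%E) ->
  exists F : seq R, [/\ uniq F, (forall u, u \in F -> 0 < u <= T') &
     forall a b, 0 <= a -> a <= b -> b <= T' ->
       Phi b - Phi a <= \sum_(u <- F | a < u <= b) J u + eta].
Proof.
move=> J0 e0 T0 hE.
have hT := hE T' T0.
have : ((Phi T' - eta)%:E < \esum_(u in [set u : R | (0 < u <= T')%R]) (J u)%:E)%E.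
  by rewrite hT lte_fin; lra.
rewrite /esum => /ereal_sup_gt [_ [X [finX XS]] <-] hX.
pose F : seq R := finmap.enum_fset (fset_set X).
have Fu : uniq F by exact: finmap.fset_uniq.
have FX : forall u, u \in F -> X u.
  by move=> u; rewrite /F in_fset_set // inE.
exists F; split => //.
  by move=> u /FX /XS.
move=> a b a0 ab bT.
rewrite fsbig_finite //= -/F sumEFin lte_fin in hX.
have Jge : forall A : set R, forall i, A i -> (0 <= (J i)%:E)%E by move=> A i _; rewrite lee_fin.
have s1 := esumID [set u : R | (0 < u <= a)%R] [set u : R | (0 < u <= b)%R] (fun u => (J u)%:E) (Jge _).
have e1 : [set u : R | (0 < u <= b)%R] `&` [set u : R | (0 < u <= a)%R] = [set u : R | (0 < u <= a)%R].
  apply/seteqP; split => u /=; first by case.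
  move=> /andP[h1 h2]; split; apply/andP; split => //; exact: le_trans h2 ab.
have e2 : [set u : R | (0 < u <= b)%R] `&` ~` [set u : R | (0 < u <= a)%R] = [set u : R | (a < u <= b)%R].
  apply/seteqP; split => u /=.
    move=> [/andP[h1 h2] /negP]; rewrite negb_and -ltNge -leNgt => /orP[h|h].
      by move: (lt_le_trans h1 h); rewrite ltxx.
    by rewrite h h2.
  move=> /andP[h1 h2]; split; first by rewrite (le_lt_trans a0 h1) h2.
  by move=> /andP[_ h3]; move: (lt_le_trans h1 h3); rewrite ltxx.
rewrite e1 e2 hE ?(le_trans a0 ab) // hE // in s1.
have s2 := esumID [set u : R | (a < u <= b)%R] [set u : R | (0 < u <= T')%R] (fun u => (J u)%:E) (Jge _).
have e3 : [set u : R | (0 < u <= T')%R] `&` [set u : R | (a < u <= b)%R] = [set u : R | (a < u <= b)%R].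
  apply/seteqP; split => u /=; first by case.
  move=> /andP[h1 h2]; split; apply/andP; split => //.
  - exact: le_lt_trans a0 h1.
  - exact: le_trans h2 bT.
rewrite e3 hT in s2.
set rest := [set u : R | (0 < u <= T')%R] `&` ~` [set u : R | (a < u <= b)%R] in s2.
have lower : ((\sum_(u <- F | ~~ (a < u <= b)) J u)%:E <= \esum_(u in rest) (J u)%:E)%E.
  apply: esum_ge; exists [set` [seq u <- F | ~~ (a < u <= b)]].
    split; first exact: finite_seq.
    move=> u /=; rewrite mem_filter => /andP[h1 h2]; split; first exact: XS (FX _ h2).
    by move=> h3; rewrite h3 in h1.
  rewrite -fsbig_seq ?filter_uniq // big_filter sumEFin //.
move: s1 s2 lower.
case: (\esum_(u in [set u : R | (a < u <= b)%R]) (J u)%:E)%E => [ra||];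
case: (\esum_(u in rest) (J u)%:E)%E => [rr||] //=.
move=> /eqP; rewrite eqe => /eqP s1 /eqP; rewrite eqe => /eqP s2.
rewrite lee_fin => lower.
rewrite (bigID (fun u => a < u <= b)) /= in hX.
lra.
Qed.
Lemma jump_near (R : realType) (x : R -> R) (u g : R) : 0 < g ->
  x @ u^'+ --> x u -> cvg (x @ u^'-) ->
  exists2 rho : R, 0 < rho & forall v w, u - rho < v -> v < u -> u <= w -> w < u + rho ->
     (jump x u) ^+ 2 - g <= (x w - x v) ^+ 2.
Proof.
move=> g0 hr hl.
set j := jump x u.
pose th := g / (4 * `|j| + 4).
have d0 : 0 < 4 * `|j| + 4 by have := normr_ge0 j; lra.
have th0 : 0 < th by rewrite /th divr_gt0.
have hth : th * (4 * `|j| + 4) = g by rewrite /th divfK // gt_eqF.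
move: hr => /cvgrPdist_lt /(_ th th0) H1.
move: hl => /cvgrPdist_lt /(_ th th0) H2.
rewrite /prop_near1 /nbhs /= in H1 H2.
move: H1 => /nbhs_ballP [e1 e10 He1].
move: H2 => /nbhs_ballP [e2 e20 He2].
exists (Num.min e1 e2); first by rewrite lt_min e10 e20.
move=> v w h1 h2 h3 h4.
have hv : `|lim (x @ u^'-) - x v| < th.
  have hb : ball u e2 v.
    rewrite /ball /= ger0_norm ?subr_ge0 ?ltW //.
    have : Num.min e1 e2 <= e2 by rewrite ge_min lexx orbT.
    lra.
  exact: (He2 v hb h2).
have hw : `|x u - x w| <= th.
  case: (eqVneq w u) => [->|wu]; first by rewrite subrr normr0 ltW.
  have uw : u < w by rewrite lt_neqAle eq_sym wu h3.
  have hb : ball u e1 w.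
    rewrite /ball /= distrC ger0_norm ?subr_ge0 ?ltW //.
    have : Num.min e1 e2 <= e1 by rewrite ge_min lexx.
    lra.
  exact: ltW (He1 w hb uw).
have hj : j = x u - lim (x @ u^'-) by [].
set L := lim (x @ u^'-) in hv hj.
set d := x w - x v.
have hdj : `|d - j| <= 2 * th.
  have -> : d - j = (x w - x u) + (L - x v) by rewrite /d hj; ring.
  apply: le_trans (ler_normD _ _) _; rewrite distrC; lra.
have hd2 : j ^+ 2 - g <= d ^+ 2.
  have -> : d = j + (d - j) by ring.
  set z := d - j in hdj *.
  have hz : - (2 * th) <= z <= 2 * th by rewrite -ler_norml.
  have hjn : - `|j| <= j <= `|j| by rewrite -ler_norml.
  have jn0 : 0 <= `|j| by [].
  nra.
exact: hd2.
Qed.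
Lemma locate2 (R : realType) (K : nat) (a : nat -> R) v :
  a 0%N < v -> v <= a K -> exists2 j, (j < K)%N & a j < v <= a j.+1.
Proof.
elim: K => [|K IH] h0 hK; first by move: (lt_le_trans h0 hK); rewrite ltxx.
case: (leP v (a K)) => hv.
  by have [j jK hj] := IH h0 hv; exists j => //; exact: ltnW.
by exists K => //; rewrite hv hK.
Qed.

Lemma near_all_seq (A : eqType) (s : seq A) (P : A -> nat -> Prop) :
  (forall u, u \in s -> \forall n \near \oo, P u n) -> \forall n \near \oo, forall u, u \in s -> P u n.
Proof.
elim: s => [|z s IH] h.
  by apply: ex_near; exists 0%N => n _ u.
have [N1 H1] := near_ex _ (h z (mem_head z s)).
have h' : forall u, u \in s -> \forall n \near \oo, P u n.
  by move=> u us; apply: h; rewrite inE us orbT.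
have [N2 H2] := near_ex _ (IH h').
apply: ex_near; exists (maxn N1 N2) => n; rewrite geq_max => /andP[n1 n2] u.
by rewrite inE => /orP[/eqP ->|us]; [exact: H1 | exact: H2].
Qed.

Lemma sum_none (R : realType) (F : seq R) (P : pred R) (J : R -> R) :
  (forall u, u \in F -> P u -> False) -> \sum_(u <- F | P u) J u = 0.
Proof.
move=> h; rewrite big_seq_cond big1 // => u /andP[uF Pu]; case: (h u uF Pu).
Qed.

Lemma sum_single (R : realType) (F : seq R) (P : pred R) (J : R -> R) c :
  uniq F -> c \in F -> P c -> (forall u, u \in F -> P u -> u = c) ->
  \sum_(u <- F | P u) J u = J c.
Proof.
move=> uF cF Pc h.
rewrite big_seq_cond (eq_bigl (fun u => u == c)).
  rewrite -big_filter (_ : [seq i <- F | i == c] = [:: c]) ?big_seq1 //.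
  exact: filter_pred1_uniq.
move=> u /=; apply/idP/idP.
  by move=> /andP[uF' Pu]; apply/eqP; exact: h.
by move=> /eqP ->; rewrite cF Pc.
Qed.
Lemma floor_h (R : realType) (h v : R) : 0 < h -> 0 <= v ->
  (Num.truncn (v / h))%:R * h <= v < (Num.truncn (v / h)).+1%:R * h.
Proof.
move=> h0 v0; have := truncn_itv (divr_ge0 v0 (ltW h0)).
by rewrite ler_pdivlMr // ltr_pdivrMr.
Qed.

Lemma truncn_mono (R : realType) (v w : R) : v <= w -> (Num.truncn v <= Num.truncn w)%N.
Proof. exact: le_truncn. Qed.

Definition UG {R : realType} (h : R) (Lg : nat) : seq R := [seq l%:R * h | l <- iota 0 Lg.+1].

Lemma UG_mem (R : realType) (h : R) Lg l : (l <= Lg)%N -> l%:R * h \in UG h Lg.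
Proof. by move=> lL; rewrite /UG; apply: (map_f (fun l : nat => l%:R * h)); rewrite mem_iota add0n ltnS lL. Qed.

Lemma UG_ge0 (R : realType) (h : R) Lg g : 0 <= h -> g \in UG h Lg -> 0 <= g.
Proof. by move=> h0; rewrite /UG => /mapP [l _ ->]; rewrite mulr_ge0. Qed.
Lemma mn_l (R : realType) (a b : R) : Num.min a b <= a. Proof. by rewrite ge_min lexx. Qed.
Lemma mn_r (R : realType) (a b : R) : Num.min a b <= b. Proof. by rewrite ge_min lexx orbT. Qed.
Lemma mn_gt0 (R : realType) (a b : R) : 0 < a -> 0 < b -> 0 < Num.min a b.
Proof. by move=> a0 b0; rewrite lt_min a0 b0. Qed.
Lemma head_filterP (T : eqType) (F : seq T) (P : pred T) d :
  (has P F -> head d [seq u <- F | P u] \in F /\ P (head d [seq u <- F | P u])) /\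
  (~~ has P F -> head d [seq u <- F | P u] = d).
Proof.
split.
  rewrite has_filter; case E: [seq u <- F | P u] => [|y l] //= _.
  have : y \in [seq u <- F | P u] by rewrite E inE eqxx.
  by rewrite mem_filter => /andP[].
by rewrite has_filter negbK => /eqP ->.
Qed.
Tactic Notation "lra_with" hyp_list(l) := clear - l; lra.

Theorem proposition2p5 (R : realType) (t : nat -> nat -> R) (k : nat -> nat)
  (x q : R -> R) :
  partition_seq t k ->
  cadlag x ->
  (forall s, 0 <= s -> qv_n t k x ^~ s @ \oo --> q s) ->
  (exists qc : R -> R,
     [/\ {within `[0, +oo[, continuous qc},
         (forall s u, 0 <= s -> s <= u -> qc s <= qc u) &
         (forall s, 0 <= s ->
            (\esum_(u in [set u : R | (0 < u <= s)%R]) ((jump x u) ^+ 2)%:E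
              = (q s - qc s)%:E)%E)]) ->
  J1_cvg (qv_n t k x) q.
Proof.
move=> Hpart Hcad Hconv [qc [qcc qcm hesum]].
case: Hpart => ht0 htinc htk htoo hmesh.
case: Hcad => Hr Hl.
apply: J1_of_local => T eps e0.
pose T0 := Num.max T 0.
pose T' := T0 + 1.
have eT' : T' = T0 + 1 by [].
have T00 : 0 <= T0 by rewrite le_max lexx orbT.
have TT0 : T <= T0 by rewrite le_max lexx.
have T'0 : 0 <= T' by rewrite /T'; lra.
pose eta := eps / 4.
have eta0 : 0 < eta by rewrite /eta divr_gt0.
have eeta : eps = 4 * eta by rewrite /eta; field.
pose J u := (jump x u) ^+ 2.
have J0 : forall u, 0 <= J u by move=> u; exact: sqr_ge0.
have [F [Fu FT HF]] := @esum_approx R J (fun s => q s - qc s) T' eta J0 eta0 T'0 hesum.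
have [dl dl0 Hdl] := @mono_unif R qc T' eta T'0 eta0 qcc qcm.
pose h := Num.min (dl / 4) (1 / 2).
have h0 : 0 < h by rewrite lt_min !divr_gt0.
have hdl : 4 * h <= dl.
  have : h <= dl / 4 by rewrite ge_min lexx.
  lra.
have h12 : h <= 1 / 2 by rewrite ge_min lexx orbT.
pose Lg := (Num.truncn (T' / h)).+2.
pose G := UG h Lg ++ F.
have [gam gam0 Hgam] := @seq_gap R G.
pose mu := Num.min (Num.min (gam / 2) h) (Num.min 1 eps).
have mu0 : 0 < mu by rewrite /mu !mn_gt0 // ?divr_gt0 // ltr01.
have mug : mu < gam.
  have : mu <= gam / 2 by rewrite /mu; apply: le_trans (mn_l _ _ _) (mn_l _ _ _).
  lra.
have muh : mu <= h by rewrite /mu; apply: le_trans (mn_l _ _ _) (mn_r _ _ _).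
have mu1 : mu <= 1 by rewrite /mu; apply: le_trans (mn_r _ _ _) (mn_l _ _ _).
have mue : mu <= eps by rewrite /mu; apply: le_trans (mn_r _ _ _) (mn_r _ _ _).
have E1 := hmesh T' mu mu0.
have E2 : \forall n \near \oo, T' + 1 < t n (k n).
  by move/cvgryPgt: htoo; apply.
have E3 : \forall n \near \oo, forall g, g \in G -> `|q g - qv_n t k x n g| <= eta.
  apply: near_all_seq => g gG.
  have g0 : 0 <= g.
    move: gG; rewrite mem_cat => /orP[gU|gF]; first exact: (@UG_ge0 R h Lg g (ltW h0) gU).
    by have /andP[/ltW] := FT g gF.
  by move/cvgrPdist_le: (Hconv g g0); apply.
have E4 : \forall n \near \oo, forall u, u \in F -> forall i, (i < k n)%N ->
    t n i < u <= t n i.+1 -> J u - eta <= dsq t x n i.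
  apply: near_all_seq => u uF.
  have /andP[u0 uT] := FT u uF.
  have [rho rho0 Hrho] := @jump_near R x u eta eta0 (Hr u (ltW u0)) (Hl u u0).
  have rho2 : 0 < rho / 2 by rewrite divr_gt0.
  have Hm := hmesh T' (rho / 2) rho2.
  near=> n.
  have Hmn : forall i, (i < k n)%N -> t n i <= T' -> t n i.+1 - t n i <= rho / 2.
    by near: n; exact: Hm.
  move=> i ik /andP[h1 h2].
  have hm := Hmn i ik (le_trans (ltW h1) uT).
  apply: Hrho => //; lra.
near=> n.
have e1 : forall i, (i < k n)%N -> t n i <= T' -> t n i.+1 - t n i <= mu by near: n; exact: E1.
have e2 : T' + 1 < t n (k n) by near: n; exact: E2.
have e3 : forall g, g \in G -> `|q g - qv_n t k x n g| <= eta by near: n; exact: E3.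
have e4 : forall u, u \in F -> forall i, (i < k n)%N ->
    t n i < u <= t n i.+1 -> J u - eta <= dsq t x n i by near: n; exact: E4.
have ht := htinc n.
have tle := @incr_le R (k n) (t n) ht.
have tlt := @incr_lt R (k n) (t n) ht.
have kpos : (0 < k n)%N.
  case E: (k n) => [|kk] //; move: e2; rewrite E ht0; lra_with T'0.
pose K := (k n).-1.
have kK : k n = K.+1 by rewrite prednK.
have tK : T' < t n K.
  rewrite ltNge; apply/negP => hK.
  have Kk : (K < k n)%N by rewrite kK.
  have := e1 K Kk hK; rewrite -kK; lra_with hK e2 mu1.
have K0 : (0 < K)%N.
  case E: K tK => [|kk] //; rewrite ht0; lra_with T'0.
have FG : forall u, u \in F -> u \in G by move=> u uF; rewrite mem_cat uF orbT.
have FG' : forall u, u \in UG h Lg -> u \in G by move=> u uF; rewrite mem_cat uF.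
have G0 : 0 \in G by rewrite mem_cat; apply/orP; left; have := @UG_mem R h Lg 0%N (leq0n _); rewrite mul0r.
have uniqI : forall j, (j < k n)%N -> t n j <= T' -> forall u v, u \in G -> v \in G ->
    t n j <= u <= t n j.+1 -> t n j <= v <= t n j.+1 -> u = v.
  move=> j jk jT u v uG vG /andP[u1 u2] /andP[v1 v2].
  apply/eqP; rewrite -[_ == _]negbK; apply/negP => uv.
  have := Hgam u v uG vG uv.
  have := e1 j jk jT.
  have : `|u - v| <= t n j.+1 - t n j by rewrite ler_norml; apply/andP; split; lra_with u1 u2 v1 v2.
  lra_with mug.
pose p j := head (t n j + Num.min (t n j.+1 - t n j) eps) [seq u <- F | (t n j < u) && (u <= t n j.+1)].
have pdef : forall j, (j < k n)%N -> t n j < p j <= t n j.+1.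
  move=> j jk; have [H1 H2] := head_filterP _ F (fun u => (t n j < u) && (u <= t n j.+1))
                                 (t n j + Num.min (t n j.+1 - t n j) eps).
  case: (boolP (has (fun u => (t n j < u) && (u <= t n j.+1)) F)) => hh.
    by have [_ ->] := H1 hh.
  rewrite /p (H2 hh).
  have hj := ht j jk.
  have m0 : 0 < Num.min (t n j.+1 - t n j) eps by apply: mn_gt0; rewrite ?subr_gt0.
  have := mn_l R (t n j.+1 - t n j) eps.
  move=> hmn; apply/andP; split; lra_with hj m0 hmn.
have pF : forall j, (j < k n)%N -> forall u, u \in F -> t n j < u <= t n j.+1 ->
    p j \in F /\ u = p j.
  move=> j jk u uF hu.
  have [H1 _] := head_filterP _ F (fun u => (t n j < u) && (u <= t n j.+1))
                                 (t n j + Num.min (t n j.+1 - t n j) eps).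
  have hh : has (fun u => (t n j < u) && (u <= t n j.+1)) F by apply/hasP; exists u.
  have [pjF pjP] := H1 hh; split => //.
  have /andP[u1 u2] := hu.
  have /andP[pj1 pj2] : t n j < p j <= t n j.+1 := pjP.
  have ujT : t n j <= T' by have /andP[_ uT] := FT u uF; lra_with u1 uT.
  by apply: (uniqI j jk ujT u (p j) (FG u uF) (FG _ pjF)); apply/andP; split; lra_with u1 u2 pj1 pj2.
have pdev : forall j, (j < k n)%N -> p j - t n j <= eps.
  move=> j jk.
  have [H1 H2] := head_filterP _ F (fun u => (t n j < u) && (u <= t n j.+1))
                                 (t n j + Num.min (t n j.+1 - t n j) eps).
  case: (boolP (has (fun u => (t n j < u) && (u <= t n j.+1)) F)) => hh.
    have [pjF' pjP] := H1 hh.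
    have pjF : p j \in F := pjF'.
    have /andP[pj1 pj2] : t n j < p j <= t n j.+1 := pjP.
    have /andP[_ pT] := FT _ pjF.
    have jT : t n j <= T' by lra_with pj1 pT.
    have := e1 j jk jT.
    lra_with pj2 mue.
  rewrite /p (H2 hh); have := mn_r R (t n j.+1 - t n j) eps; lra_with e0.
pose a j := if j == 0%N then 0 else p j.
have aS : forall j, a j.+1 = p j.+1 by [].
have a0 : a 0%N = 0 by [].
have aH : plhyp K a (t n).
  split => //.
  - move=> j jK.
    have j1k : (j.+1 < k n)%N by rewrite kK ltnS.
    have /andP[p1 _] := pdef j.+1 j1k.
    rewrite aS.
    case: j jK j1k p1 => [|j] jK j1k p1.
      have kk1 : (0 < k n)%N by [].
      have := ht 0%N kk1; rewrite ht0 a0 => hh0; lra_with hh0 p1.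
    rewrite aS.
    have /andP[_ p2] := pdef j.+1 (ltn_trans (ltnSn _) j1k).
    lra_with p1 p2.
  - by move=> j jK; apply: ht; rewrite kK; exact: (ltn_trans jK).
exists (pl K a (t n)); rewrite /good; split.
- exact: pl_tc.
- apply: pl_dev => // j jK.
  case: j jK => [|j] jK; first by rewrite a0 ht0 subrr normr0 ltW.
  have jk : (j.+1 < k n)%N by rewrite kK ltnS.
  have /andP[p1 _] := pdef j.+1 jk.
  rewrite aS distrC ger0_norm; first exact: pdev.
  rewrite subr_ge0; exact: ltW.
move=> s s0 sT.
have sT0 : s <= T0 := le_trans sT TT0.
have Gge0 : forall g, g \in G -> 0 <= g.
  move=> g; rewrite mem_cat => /orP[gU|gF]; first exact: (@UG_ge0 R h Lg g (ltW h0) gU).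
  by have /andP[/ltW] := FT g gF.
have tge0 : forall j, (j <= k n)%N -> 0 <= t n j.
  by move=> j jk; rewrite -(ht0 n); apply: tle; rewrite leq0n jk.
have ta : forall j, (j < k n)%N -> t n j <= a j.
  case=> [|j] jk; first by rewrite a0 ht0.
  by rewrite aS; have /andP[pp _] := pdef j.+1 jk; exact: ltW.
have Kk : (K < k n)%N by rewrite kK.
have aK : a K = p K by rewrite /a (negbTE (lt0n_neq0 K0)).
have saK : s < a K.
  have /andP[pp _] := pdef K Kk; rewrite aK; lra_with pp tK sT0 eT'.
have h00 : a 0%N <= s by rewrite a0.
have [i iK /andP[ai1 ai2]] := @locate R K a s h00 saK.
have ik : (i < k n)%N by rewrite kK ltnS ltnW.
have i1k : (i.+1 < k n)%N by rewrite kK ltnS.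
have /andP[r1 r2] : t n i <= pl K a (t n) s < t n i.+1.
  by apply: pl_range => //; rewrite ai1 ai2.
rewrite (@qv_step R t k x n i (pl K a (t n) s) ht ik); last by rewrite r1 r2.
have ti_s : t n i <= s := le_trans (ta i ik) ai1.
have ti0 : 0 <= t n i := tge0 i (ltnW ik).
have hi : t n i.+1 - t n i <= mu by apply: e1 => //; lra_with ti_s sT0 eT'.
have ti1T : t n i.+1 <= T' by lra_with hi mu1 ti_s sT0 eT'.
have hi1 : t n i.+2 - t n i.+1 <= mu by apply: e1.
have /andP[_ pi1] := pdef i.+1 i1k.
have sti2 : s < t n i.+2 by move: ai2; rewrite aS => hh0; lra_with hh0 pi1.
have hasA : has (fun g => g <= t n i) G by apply/hasP; exists 0.
have [ga [gaG gat gamax]] := @seq_max R G (fun g => g <= t n i) hasA.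
have ga0 := Gge0 ga gaG.
have gaL : t n i - h <= ga.
  pose l := Num.truncn (t n i / h).
  have /andP[f1 f2] := @floor_h R h (t n i) h0 ti0.
  have lL : (l <= Lg)%N.
    apply: leq_trans (_ : (Num.truncn (T' / h) <= Lg)%N); last by rewrite /Lg leqW.
    apply: le_truncn; apply: ler_pM => //; [by rewrite invr_ge0 ltW | lra_with ti_s sT0 eT'].
  have := gamax _ (FG' _ (@UG_mem R h Lg l lL)) f1.
  move: f2; rewrite -natr1 mulrDl mul1r; lra_with h0.
have s0' : 0 <= s := s0.
have lL' : ((Num.truncn (s / h)).+1 <= Lg)%N.
  rewrite /Lg ltnS; apply: leqW; apply: le_truncn; apply: ler_pM => //; [by rewrite invr_ge0 ltW | lra_with sT0 eT'].
have /andP[g1 g2] := @floor_h R h s h0 s0.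
have hasB : has (fun g => s <= g) G.
  apply/hasP; exists ((Num.truncn (s / h)).+1%:R * h); first exact: FG' _ (@UG_mem R h Lg _ lL').
  exact: ltW.
have [gb [gbG gbs gbmin]] := @seq_min R G (fun g => s <= g) hasB.
have gbU : gb <= s + h.
  have := gbmin _ (FG' _ (@UG_mem R h Lg _ lL')) (ltW g2).
  move: g1; rewrite -natr1 mulrDl mul1r; lra_with h0.
have gbT : gb <= T' by lra_with gbU sT0 h12 eT'.
have sgbd : gb - s <= dl by lra_with gbU hdl h0.
have gasd : s - ga <= dl by lra_with gaL hi hi1 sti2 muh hdl h0.
have pFi : forall j, (j < k n)%N -> forall u, u \in F -> t n j < u <= t n j.+1 -> (0 < j)%N /\ u = a j.
  move=> j jk u uF hu; have [pjF ->] := pF j jk u uF hu.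
  case: (posnP j) => [j0|jpos].
    exfalso; move: hu; rewrite j0 => /andP[u1 u2].
    have t0T : t n 0%N <= T' by rewrite ht0.
    have h0u : t n 0%N <= 0 <= t n 1%N.
      by rewrite ht0 lexx /=; have := ht 0%N kpos; rewrite ht0 => /ltW.
    have h0u' : t n 0%N <= u <= t n 1%N by rewrite (ltW u1) u2.
    have e := uniqI 0%N kpos t0T 0 u G0 (FG u uF) h0u h0u'.
    by move: u1; rewrite -e ht0 ltxx.
  by split => //; rewrite /a (negbTE (lt0n_neq0 jpos)).
have sT' : s <= T' by lra_with sT0 eT'.
have C1 : forall u, u \in F -> ga < u <= s -> (0 < i)%N /\ u = a i.
  move=> u uF /andP[u1 u2].
  have uG := FG u uF.
  have ut : t n i < u.
    rewrite ltNge; apply/negP => hu; have hh := gamax u uG hu; lra_with hh u1.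
  case: (leP u (t n i.+1)) => ut1.
    by apply: (pFi i ik u uF); rewrite ut ut1.
  exfalso.
  have uI : t n i.+1 < u <= t n i.+2 by rewrite ut1 /=; lra_with u2 sti2.
  have [_ e] := pFi i.+1 i1k u uF uI.
  move: ai2; rewrite -e => hh; lra_with hh u2.
have C2 : forall u, u \in F -> s < u <= gb -> u = gb.
  move=> u uF /andP[u1 u2]; apply/eqP; rewrite eq_le u2 /=; apply: gbmin; [exact: FG | exact: ltW].
have C3 : gb \in F -> s < gb -> t n i.+1 < gb.
  move=> gbF sgb; rewrite ltNge; apply/negP => hb.
  have hti : t n i < gb by lra_with ti_s sgb.
  have hI : t n i < gb <= t n i.+1 by rewrite hti hb.
  have [_ e] := pFi i ik gb gbF hI.
  move: sgb; rewrite e => hh; lra_with hh ai1.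
have e3ga := e3 ga gaG; move: e3ga; rewrite ler_norml => /andP[j3a j3b].
have e3gb := e3 gb gbG; move: e3gb; rewrite ler_norml => /andP[k3a k3b].
have j6 := Hdl ga s ga0 (le_trans gat ti_s) sT' gasd.
have k6 := Hdl s gb s0 gbs gbT sgbd.
have UB : qv_n t k x n (t n i) <= q s + 4 * eta.
  have k5 := HF s gb s0 gbs gbT.
  case: (boolP ((gb \in F) && (s < gb))) => [/andP[gbF sgb]|hnot].
    have tb := C3 gbF sgb.
    have gb0 : t n 0%N < gb by rewrite ht0; lra_with s0 sgb.
    have gbk : gb <= t n (k n) by lra_with gbT e2.
    have [i' i'k /andP[b1 b2]] := @locate2 R (k n) (t n) gb gb0 gbk.
    have ii' : (i < i')%N.
      rewrite ltnNge; apply/negP => hi'.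
      have hh : t n i'.+1 <= t n i.+1 by apply: tle; rewrite ltnS hi' /= (ltnW i1k).
      lra_with hh b2 tb.
    have tii' : t n i < t n i' by apply: tlt; rewrite ii' (ltnW i'k).
    have j1 := @qv_jump R t k x n i' (t n i) ht i'k tii'.
    have j2 := @qv_mono R t k x n (t n i') gb (ltW b1).
    have j4 : J gb - eta <= dsq t x n i' by apply: e4 => //; rewrite b1 b2.
    have hs1 : s < gb <= gb by rewrite sgb lexx.
    rewrite (@sum_single R F (fun u => s < u <= gb) J gb Fu gbF hs1 C2) in k5.
    lra_with j1 j2 k3a k3b j4 k5 k6.
  have none1 : forall u, u \in F -> s < u <= gb -> False.
    move=> u uF hu; have e := C2 u uF hu; move/negP: hnot; apply; rewrite -e uF /=.
    by case/andP: hu.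
  rewrite (@sum_none R F (fun u => s < u <= gb) J none1) in k5.
  have j2 := @qv_mono R t k x n (t n i) gb (le_trans ti_s gbs).
  lra_with j2 k3a k3b k5 k6 eta0.
have LB : q s - 4 * eta <= qv_n t k x n (t n i).
  have j5 := HF ga s ga0 (le_trans gat ti_s) sT'.
  case: (boolP ((0 < i)%N && (p i \in F))) => [/andP[ipos piF]|hnot].
    have ai : a i = p i by rewrite /a (negbTE (lt0n_neq0 ipos)).
    have /andP[pi_1 pi_2] := pdef i ik.
    have gati : ga < t n i.
      rewrite lt_neqAle gat andbT; apply/negP => /eqP e.
      have tiT : t n i <= T' by lra_with ti_s sT0 eT'.
      have hti := ht i ik.
      have hga : t n i <= ga <= t n i.+1 by rewrite e lexx /= ltW.
      have hpi : t n i <= p i <= t n i.+1 by rewrite (ltW pi_1) pi_2.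
      have e2' := uniqI i ik tiT ga (p i) gaG (FG _ piF) hga hpi.
      lra_with e2' e pi_1.
    have j1 := @qv_jump R t k x n i ga ht ik gati.
    have j4 : J (p i) - eta <= dsq t x n i by apply: e4 => //; rewrite pi_1 pi_2.
    have C1' : forall u, u \in F -> ga < u <= s -> u = p i.
      by move=> u uF hu; have [_ e] := C1 u uF hu; rewrite e ai.
    have hs1 : ga < p i <= s.
      apply/andP; split; [lra_with gati pi_1 | by rewrite -ai].
    rewrite (@sum_single R F (fun u => ga < u <= s) J (p i) Fu piF hs1 C1') in j5.
    lra_with j1 j3a j3b j4 j5 j6.
  have none2 : forall u, u \in F -> ga < u <= s -> False.
    move=> u uF hu; have [ipos e] := C1 u uF hu; move/negP: hnot; apply; rewrite ipos /=.
    by rewrite /a (negbTE (lt0n_neq0 ipos)) in e; rewrite -e.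
  rewrite (@sum_none R F (fun u => ga < u <= s) J none2) in j5.
  have j2 := @qv_mono R t k x n ga (t n i) gat.
  lra_with j2 j3a j3b j5 j6 eta0.
rewrite ler_norml; apply/andP; split; lra_with UB LB eeta.
Unshelve. all: by end_near.
Qed.
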